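(* (Construction of real regular cyclic sequences.) Let $a_nx^n+\dots+a_1x+a_0$ be a polynomial whose coefficients $a_0,\dots,a_n$ are all strictly positive integers, and set $$p(x)=(x+1)(a_nx^n+\dots+a_0)=b_{n+1}x^{n+1}+b_nx^n+\dots+b_1x+b_0,$$ so $b_{n+1}=a_n$, $b_k=a_k+a_{k-1}$ for $1\le k\le n$, $b_0=a_0$. Let $y$ be any real root of $p$ and $N=2\sum_k a_k$. Then it is always possible to choose a cyclic sequence of increments $(y_1,\dots,y_N)$ (indices mod $N$) taken from $\{1,y,y^2,\dots,y^{n+1}\}$ in which each $y^k$ occurs exactly $b_k$ times and any two cyclically adjacent increments are powers of $y$ whose exponents differ by exactly one; and for any such choice and any $x_0\in\mathbb{C}$, the sequence defined by $x_\ell-x_{\ell-1}=y_\ell$ ($\ell=1,\dots,N$) satisfies $x_N=x_0$ and is a real regular cyclic sequence on the cyclic graph of order $N$ with $\gamma=2(1+y^2)/(1-y)^2$. Conversely, up to replacing $(x_k)$ by $(\lambda x_k+\mu)$ ($\lambda\in\mathbb{C}\setminus\{0\},\mu\in\mathbb{C}$) and cyclic permutation, every non-constant real regular cyclic sequence with $\gamma\ne 1,2$ arises by this construction. The regular cyclic sequences with $\gamma=2$ are exactly those made up of connected (cyclic) segments of length $\ge 2$ on each of which the sequence is constant; the non-constant real regular cyclic sequences with $\gamma=1$ are exactly those equivalent under normalization to $(0,1,0,1,\dots,0,1)$.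
   Context: The cyclic graph of order $N\ge 3$ has vertices $0,1,\dots,N-1$ with $k\sim k\pm1 \pmod N$. A regular cyclic sequence is $(x_0,\dots,x_{N-1})\in\mathbb{C}^N$, with indices taken mod $N$ (so $x_N=x_0$), satisfying for every $k$ and a fixed real constant $\gamma$: $$\frac{\gamma}{2}(x_{k-1}+x_{k+1}-2x_k)^2=(x_{k-1}-x_k)^2+(x_{k+1}-x_k)^2 .$$ Normalization means replacing $x_k$ by $\lambda x_k+\mu$ with $\lambda\in\mathbb{C}\setminus\{0\}$, $\mu\in\mathbb{C}$ (this preserves the equations). A regular cyclic sequence is real if under some normalization all its terms are real. *)

(* Defs.v *)
(* The complex numbers are modelled by an arbitrary
   numClosedFieldType C (an algebraically closed field with conjugation,
   order on the reals and norm; algC is an instance). *)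
From HB Require Import structures.
From mathcomp Require Import all_boot all_order all_algebra.
Set Implicit Arguments. Unset Strict Implicit. Unset Printing Implicit Defensive.
Import Order.TTheory GRing.Theory Num.Theory.
Local Open Scope ring_scope.

Section Defs.
Variable C : numClosedFieldType.

(* A cyclic sequence of order N is a function 'I_N -> C; the neighbours of
   k are ord_pred k (= k-1 mod N) and ordS k (= k+1 mod N). *)
Definition regular (N : nat) (gamma : C) (x : 'I_N -> C) : Prop :=
  forall k : 'I_N,
    gamma / 2 * (x (ord_pred k) + x (ordS k) - 2 * x k) ^+ 2
    = (x (ord_pred k) - x k) ^+ 2 + (x (ordS k) - x k) ^+ 2.

Definition real_seq (N : nat) (x : 'I_N -> C) : Prop :=
  exists l m : C, l != 0 /\ forall k, (l * x k + m) \is Num.real.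

Definition nonconstant (N : nat) (x : 'I_N -> C) : Prop :=
  exists i j : 'I_N, x i != x j.

Definition pA (n : nat) (a : nat -> nat) : {poly C} :=
  \poly_(i < n.+1) (a i)%:R.
Definition pX1A (n : nat) (a : nat -> nat) : {poly C} :=
  ('X + 1) * pA n a.

(* Increments y_1, ..., y_N are encoded by exponents: y_{i+1} = y ^+ e i,
   for i : 'I_N. *)
Definition incr_ok (N n : nat) (a : nat -> nat) (e : 'I_N -> nat) : Prop :=
  [/\ forall i, (e i <= n.+1)%N,
      forall k, (k <= n.+1)%N -> (#|[set i | e i == k]|)%:R = (pX1A n a)`_k
    & forall i : 'I_N, (e i == (e (ordS i)).+1) || (e (ordS i) == (e i).+1)].

Definition cons_seq (N : nat) (y : C) (e : 'I_N -> nat) (x0 : C) : 'I_N -> C :=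
  fun k => x0 + \sum_(i < N | (i < k)%N) y ^+ e i.

Definition cons_last (N : nat) (y : C) (e : 'I_N -> nat) (x0 : C) : C :=
  x0 + \sum_(i < N) y ^+ e i.

Definition gamma_of (y : C) : C := 2 * (1 + y ^+ 2) / (1 - y) ^+ 2.

Definition rotation (N : nat) (r : 'I_N -> 'I_N) : Prop :=
  forall k, r (ordS k) = ordS (r k).

End Defs.

(* Main.v *)
Set Warnings "-all".
Require Import Defs.
From HB Require Import structures.
From mathcomp Require Import all_boot all_order all_algebra ring zify.
Import Order.TTheory GRing.Theory Num.Theory.
Definition rr (u v : nat) : bool := (u == v.+1) || (v == u.+1).
Definition bounce (k m : nat) : seq nat := flatten (nseq m [:: k.+1; k]).
Fixpoint Aseq (a : nat -> nat) (n : nat) : seq nat :=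
  match n with
  | 0 => bounce 0 (a 0).-1
  | n'.+1 => Aseq a n' ++ n :: bounce n (a n).-1
  end.
Fixpoint Dseq (n : nat) : seq nat :=
  match n with 0 => [:: 0] | n'.+1 => n :: Dseq n' end.
Definition Lseq a n := Aseq a n ++ n.+1 :: Dseq n.

Definition cm (j : nat) (s : seq nat) : nat := count (fun x : nat => x == j) s.
Lemma cm_cat j s1 s2 : cm j (s1 ++ s2) = (cm j s1 + cm j s2)%N.
Proof. exact: count_cat. Qed.
Lemma cm_cons j x s : cm j (x :: s) = ((x == j) + cm j s)%N.
Proof. by []. Qed.
Lemma cm_nil j : cm j [::] = 0%N. Proof. by []. Qed.

Lemma bounce_S k m : bounce k m.+1 = k.+1 :: k :: bounce k m.
Proof. by []. Qed.

Lemma bounce_path k m : path rr k (bounce k m) && (last k (bounce k m) == k).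
Proof.
elim: m => [|m IH] //=.
by rewrite /rr !eqxx /= orbT.
Qed.

Lemma Aseq_path a n : path rr 0 (Aseq a n) && (last 0 (Aseq a n) == n).
Proof.
elim: n => [|n IH] /=; first exact: bounce_path.
case/andP: IH => p1 /eqP l1.
rewrite cat_path last_cat p1 l1 /=.
have /andP [p2 l2] := bounce_path n.+1 (a n.+1).-1.
by rewrite p2 l2 /rr eqxx orbT.
Qed.

Lemma Dseq_path n : path rr n.+1 (Dseq n) && (last n.+1 (Dseq n) == 0%N).
Proof.
elim: n => [|n IH] /=; first by rewrite /rr eqxx.
by case/andP: IH => -> ->; rewrite /rr eqxx.
Qed.

Lemma Lseq_path a n : path rr 0 (Lseq a n) && (last 0 (Lseq a n) == 0%N).
Proof.
rewrite /Lseq cat_path last_cat /=.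
have /andP [p1 /eqP ->] := Aseq_path a n.
have /andP [p2 l2] := Dseq_path n.
by rewrite p1 p2 l2 /rr eqxx orbT.
Qed.

Lemma bounce_count (j k m : nat) :
  cm j (bounce k m) = ((if j == k.+1 then m else 0) + (if j == k then m else 0))%N.
Proof.
elim: m => [|m IH]; first by rewrite /cm /=; repeat case: ifP.
rewrite bounce_S !cm_cons IH; repeat case: ifP => ?; lia.
Qed.

Lemma bounce_size k m : size (bounce k m) = (2 * m)%N.
Proof. by elim: m => //= m ->; lia. Qed.

Lemma Aseq_count (a : nat -> nat) (n j : nat) : (forall k, k <= n -> 0 < a k)%N ->
  (cm j (Aseq a n) + (j <= n) =
   (if j <= n then a j else 0) + (if (0 < j <= n) then a j.-1 else 0)
   + (if j == n.+1 then (a n).-1 else 0))%N.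
Proof.
elim: n => [|n IH] ha.
  rewrite [Aseq a 0]/= bounce_count; have := ha 0%N (leqnn 0).
  case: j => [|[|j]] /=; move: (ha 0%N (leqnn 0)); move: (a 0) => a0 h;
    repeat case: ifP => ?; lia.
have IH' := IH (fun k hk => ha k (leqW hk)).
have := ha n.+1 (leqnn _); have := ha n (leqnSn _).
rewrite [Aseq a n.+1]/= cm_cat cm_cons bounce_count.
have : (j <= n \/ j = n.+1 \/ j = n.+2 \/ n.+2 < j)%N by lia.
case=> [h|[h|[h|h]]].
- move: IH'; rewrite h; repeat case: ifP => ?; lia.
- subst j; move: IH'; rewrite /= !eqxx !ltnn /= !leqnn.
  repeat case: ifP => ?; lia.
- subst j; move: IH'; repeat case: ifP => ?; lia.
- move: IH'; repeat case: ifP => ?; lia.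
Qed.

Lemma Dseq_count (n j : nat) : cm j (Dseq n) = (j <= n)%N.
Proof.
elim: n => [|n IH]; first by rewrite [Dseq 0]/= cm_cons cm_nil; lia.
rewrite [Dseq _]/= cm_cons IH; lia.
Qed.

Lemma Aseq_size a n : (forall k, k <= n -> 0 < a k)%N ->
  (size (Aseq a n) + n.+2 = 2 * \sum_(k < n.+1) a k)%N.
Proof.
elim: n => [|n IH] ha.
  rewrite /= bounce_size big_ord1 /=; have := ha 0%N (leqnn 0); clear ha; move: (a 0) => a0; lia.
have -> : \sum_(k < n.+2) a k = \sum_(k < n.+1) a k + a n.+1 by rewrite big_ord_recr.
rewrite [Aseq a n.+1]/= size_cat /= bounce_size.
have := IH (fun k hk => ha k (leqW hk)); have := ha n.+1 (leqnn _); clear IH ha.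
move: (size (Aseq a n)) (\sum_(k < n.+1) a k) (a n.+1) => s S x; lia.
Qed.

Local Open Scope ring_scope.

Lemma iter_ordS_val N (i : 'I_N) m : val (iter m (@ordS N) i) = ((i + m) %% N)%N.
Proof.
elim: m => [|m IH] /=; first by rewrite addn0 modn_small.
by rewrite IH /= -addn1 modnDml addn1 addnS.
Qed.

Lemma cyc_ind N (P : 'I_N -> Prop) (i0 : 'I_N) :
  P i0 -> (forall k, P k -> P (ordS k)) -> forall k, P k.
Proof.
move=> H0 HS k.
have H m : P (iter m (@ordS N) i0) by elim: m => //= m IH; apply: HS.
have -> : k = iter (k + N - i0) (@ordS N) i0.
  apply: val_inj; rewrite iter_ordS_val.
  have hi := ltn_ord i0; have hk := ltn_ord k.
  have -> : (i0 + (k + N - i0) = k + N)%N by lia.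
  by rewrite modnDr modn_small.
exact: H.
Qed.

Lemma ordS_predK N (k : 'I_N) : ordS (ord_pred k) = k. Proof. exact: ord_predK. Qed.
Lemma pred_ordSK N (k : 'I_N) : ord_pred (ordS k) = k. Proof. exact: ordSK. Qed.


Lemma absB_aux (t : int) (B : nat) : (absz t <= B)%N -> (absz (t + B%:Z))%:Z = t + B%:Z.
Proof. lia. Qed.
Lemma ez_aux (wi wm : nat) (zi zm B : int) : wi%:Z = zi + B -> wm%:Z = zm + B ->
  (wm <= wi)%N -> ((wi - wm)%N)%:Z = zi - zm.
Proof. lia. Qed.
Lemma eadj_aux (u v : nat) (a b c : int) : u%:Z = a - c -> v%:Z = b - c ->
  (b = a + 1 \/ b = a - 1) -> ((u == v.+1) || (v == u.+1))%N.
Proof. lia. Qed.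
Lemma M1_aux (u v M : nat) : (u <= M)%N -> (v <= M)%N -> ((u == v.+1) || (v == u.+1))%N -> (0 < M)%N.
Proof. lia. Qed.
Lemma cross_aux (u v k : nat) : ((u == v.+1) || (v == u.+1))%N ->
  ((u <= k) + ((u == k.+1) && (v == k)) = (v <= k) + ((u == k) && (v == k.+1)))%N.
Proof. lia. Qed.
Lemma cnt0_aux (u v : nat) : ((u == v.+1) || (v == u.+1))%N ->
  ((u == 0) = (u == 0) && (v == 1) :> nat)%N.
Proof. lia. Qed.
Lemma cntS_aux (u v k : nat) : ((u == v.+1) || (v == u.+1))%N ->
  ((u == k.+1) = ((u == k.+1) && (v == k.+2)) + ((u == k.+1) && (v == k)) :> nat)%N.
Proof. lia. Qed.
Lemma an1_aux (u v n : nat) : (v <= n.+1)%N -> (((u == n.+1) && (v == n.+2)) = false).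
Proof. lia. Qed.
Lemma apos_aux (u v k : nat) : ((u == v.+1) || (v == u.+1))%N -> (u <= k)%N ->
  ((u == k) && (v == k.+1)) = false -> (v <= k)%N.
Proof. lia. Qed.

Section S.
Variable C : numClosedFieldType.

Lemma two_neq0 : (2 : C) != 0. Proof. by rewrite pnatr_eq0. Qed.

Lemma reg2_k (u v : C) : 2 / 2 * (u + v) ^+ 2 = u ^+ 2 + v ^+ 2 <-> u * v = 0.
Proof.
rewrite divff ?two_neq0 // mul1r.
have E : (u + v) ^+ 2 = u ^+ 2 + v ^+ 2 + 2 * (u * v) by ring.
rewrite E; split => H.
  have : 2 * (u * v) = 0.
    by apply: (addrI (u ^+ 2 + v ^+ 2)); rewrite addr0.
  by move/eqP; rewrite mulf_eq0 (negbTE two_neq0) /= => /eqP.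
by rewrite H mulr0 addr0.
Qed.

Lemma reg_uv (g a b c : C) :
  g / 2 * (a + b - 2 * c) ^+ 2 = (a - c) ^+ 2 + (b - c) ^+ 2 <->
  g / 2 * ((a - c) + (b - c)) ^+ 2 = (a - c) ^+ 2 + (b - c) ^+ 2.
Proof. by have -> : a + b - 2 * c = (a - c) + (b - c) by ring. Qed.

Lemma partC N (x : 'I_N -> C) : regular 2 x <->
     exists c : pred 'I_N,
       (forall k, c k -> ~~ c (ordS k)) /\
       (forall k, ~~ c (ordS k) -> x (ordS k) = x k).
Proof.
split.
  move=> H; exists (fun k => x k != x (ord_pred k)); split.
    move=> k hk; rewrite pred_ordSK negbK.
    have := H k; rewrite reg_uv reg2_k => /eqP; rewrite mulf_eq0 => /orP [].
      by rewrite subr_eq0 eq_sym (negbTE hk).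
    by rewrite subr_eq0.
  by move=> k; rewrite negbK pred_ordSK => /eqP.
move=> [c [H1 H2]] k; rewrite /regular reg_uv reg2_k.
case hc: (c k).
  by rewrite (H2 k (H1 k hc)) subrr mulr0.
have := H2 (ord_pred k); rewrite ordS_predK hc => /(_ isT) ->.
by rewrite subrr mul0r.
Qed.

Lemma reg1_k (u v : C) : 1 / 2 * (u + v) ^+ 2 = u ^+ 2 + v ^+ 2 <-> u = v.
Proof.
split=> [H|->]; last first.
  by field.
have H2 : (u + v) ^+ 2 = 2 * (u ^+ 2 + v ^+ 2).
  by rewrite -H; field.
have : (u - v) ^+ 2 = 0.
  have -> : (u - v) ^+ 2 = 2 * (u ^+ 2 + v ^+ 2) - (u + v) ^+ 2 by ring.
  by rewrite H2 subrr.
by move/eqP; rewrite expf_eq0 /= subr_eq0 => /eqP.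
Qed.

Lemma reg1P N (x : 'I_N -> C) : regular 1 x <-> forall k, x (ord_pred k) = x (ordS k).
Proof.
split=> H k.
  by have := H k; rewrite reg_uv reg1_k => /(congr1 (fun t => t + x k)); rewrite !subrK.
by rewrite reg_uv reg1_k H.
Qed.

Lemma partD N (x : 'I_N -> C) : (3 <= N)%N ->
     (regular 1 x /\ real_seq x /\ nonconstant x) <->
     (~~ odd N /\ exists l m : C, l != 0 /\
        forall k : 'I_N, l * x k + m = (odd k)%:R).
Proof.
case: N x => [|N] x // hN.
have v1 : nat_of_ord (inord 1 : 'I_N.+1) = 1%N by rewrite inordK //; lia.
split.
  move=> [/reg1P H [_ [i0 [j0 hij]]]].
  pose A := x ord0; pose B := x (inord 1).
  have P2 i : (i.+1 < N.+1)%N -> x (inord i) = (if odd i then B else A) /\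
                               x (inord i.+1) = (if odd i.+1 then B else A).
    elim: i => [|i IH] hi.
      split; last by [].
      by rewrite /A /=; congr x; apply: val_inj; exact: inordK.
    move: (IH (ltnW hi)) => [IH1 IH2]; split; first exact: IH2.
    have <- : ordS (ordS (inord i)) = inord i.+2 :> 'I_N.+1.
      apply: val_inj; rewrite /= !inordK; try lia.
      rewrite (modn_small (m := i.+1)); last lia.
      by rewrite modn_small //.
    have := H (ordS (inord i)); rewrite pred_ordSK => <-.
    by rewrite IH1 /= negbK.
  have Xk (k : 'I_N.+1) : x k = (if odd k then B else A).
    have hk := ltn_ord k.
    have -> : k = inord k by rewrite inord_val.
    case: (ltnP k.+1 N.+1) => hk2; first by rewrite (proj1 (P2 _ hk2)) inordK.
    have e : k = N :> nat by lia.
    have := proj2 (P2 k.-1 _); rewrite prednK; last by lia.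
    by move=> /(_ ltac:(lia)) ->; rewrite inordK.
  have AB : A != B.
    apply: contraNneq hij => eAB.
    by rewrite !Xk -eAB !if_same.
  split.
    apply/negP => oN.
    move: (H ord0); rewrite !Xk /=. rewrite modn_small // modn_small; last lia.
    have -> : odd N = false by move: oN => /=; case: (odd N).
    by move=> /eqP; rewrite /= (negbTE AB).
  exists (B - A)^-1, (- (A / (B - A))); split.
    by rewrite invr_eq0 subr_eq0 eq_sym.
  move=> k; rewrite Xk; have BA : B - A != 0 by rewrite subr_eq0 eq_sym.
  by case: (odd k) => /=; apply: (mulfI BA); field.
move=> [eN [l [m [l0 H]]]].
have Xk k : x k = ((odd k)%:R - m) / l.
  by rewrite -(H k) addrK mulrC mulKf.
split; last split.
- apply/reg1P => k; rewrite !Xk; congr (((nat_of_bool _)%:R - m) / l).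
  rewrite /= !odd_mod; last by move: eN => /=; case: odd.
  + by rewrite addnS /= oddD; move: eN => /= /negbNE ->; case: odd.
  + by move: eN => /=; case: odd.
- by exists l, m; split=> // k; rewrite H; case: odd.
- exists ord0, (inord 1); rewrite !Xk v1 /=.
  apply/negP => /eqP /(congr1 (fun t => t * l)); rewrite !divfK //.
  by move/addIr/eqP; rewrite eq_sym oner_eq0.
Qed.

Lemma card_sum N (P : pred 'I_N) : #|[set i | P i]| = (\sum_(i < N) (P i : nat))%N.
Proof.
rewrite -sum1dep_card big_mkcond /=; apply: eq_bigr => i _; by case: (P i).
Qed.

Lemma card_nth N (L : seq nat) (j : nat) : size L = N ->
  #|[set i : 'I_N | nth 0%N L i == j]| = cm j L.
Proof.
move=> <-; rewrite /cm -sum1_count (big_nth 0%N) big_mkord sum1dep_card.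
by [].
Qed.

Lemma sum_partition N (e : 'I_N -> nat) M (F : nat -> C) :
  (forall i, e i < M)%N ->
  \sum_(i < N) F (e i) = \sum_(k < M) (#|[set i | e i == k]|)%:R * F k.
Proof.
move=> hM.
transitivity (\sum_(i < N) \sum_(k < M) ((e i == k)%:R * F k)).
  apply: eq_bigr => i _; rewrite (bigD1 (Ordinal (hM i))) //= eqxx mul1r.
  rewrite big1 ?addr0 // => k hk.
  have -> : (e i == k) = false; last by rewrite mul0r.
  apply/negbTE; apply: contra hk => /eqP ek; apply/eqP/val_inj => /=.
  by rewrite ek.
rewrite exchange_big; apply: eq_bigr => k _.
by rewrite -mulr_suml card_sum natr_sum.
Qed.

Lemma sum_ltS N (F : 'I_N -> C) (k : 'I_N) :
  \sum_(i < N | (i < k.+1)%N) F i = \sum_(i < N | (i < k)%N) F i + F k.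
Proof.
rewrite (bigD1 k) ?ltnSn //= addrC; congr (_ + _); apply: eq_bigl => i.
by rewrite ltnS -val_eqE /= andbC -ltn_neqAle.
Qed.

Lemma cons_step N (y : C) (e : 'I_N -> nat) (x0 : C) (k : 'I_N) :
  \sum_(i < N) y ^+ e i = 0 ->
  cons_seq y e x0 (ordS k) - cons_seq y e x0 k = y ^+ e k.
Proof.
move=> h0; rewrite /cons_seq /=.
have hk := ltn_ord k.
case: (ltnP k.+1 N) => hk1.
  rewrite modn_small // sum_ltS; ring.
have eN : k.+1 = N by lia.
rewrite eN modnn big_pred0 ?addr0; last by move=> i.
have : \sum_(i < N) y ^+ e i = \sum_(i < N | (i < k.+1)%N) y ^+ e i.
  by apply: eq_bigl => i; rewrite eN ltn_ord.
rewrite sum_ltS h0 => /eqP; rewrite eq_sym addr_eq0 => /eqP ->; ring.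
Qed.

Lemma size_pX1A n a : (size (pX1A C n a) <= n.+2)%N.
Proof.
rewrite /pX1A; apply: leq_trans (size_mul_leq _ _) _.
rewrite size_XaddC; have := size_poly n.+1 (fun i => (a i)%:R : C).
rewrite /pA; move: (size _) => s; lia.
Qed.

Lemma sum_pow_eq n a N (e : 'I_N -> nat) (y : C) : incr_ok C n a e ->
  \sum_(i < N) y ^+ e i = (pX1A C n a).[y].
Proof.
case=> he hc _.
rewrite (@sum_partition N e n.+2 (fun k => y ^+ k)) => [|i]; last by rewrite ltnS.
rewrite (horner_coef_wide _ (size_pX1A n a)); apply: eq_bigr => k _.
by rewrite hc // -ltnS.
Qed.

Lemma pX1A_at1 n a : (forall k, (k <= n)%N -> (0 < a k)%N) -> (pX1A C n a).[1] != 0.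
Proof.
move=> ha; rewrite /pX1A /pA hornerM hornerD hornerX hornerC horner_poly.
rewrite mulf_eq0 negb_or; apply/andP; split; first by rewrite (pnatr_eq0 C 2).
under eq_bigr do rewrite expr1n mulr1.
rewrite -natr_sum pnatr_eq0 -lt0n big_ord_recl addn_gt0.
by apply/orP; left; exact: (ha 0%N (leq0n _)).
Qed.

Lemma gamma_alg (y : C) (s t : nat) : y != 1 -> ((s == t.+1) || (t == s.+1))%N ->
  gamma_of y / 2 * (- y ^+ s + y ^+ t) ^+ 2 = (- y ^+ s) ^+ 2 + (y ^+ t) ^+ 2.
Proof.
move=> y1; have y1' : 1 - y != 0 by rewrite subr_eq0 eq_sym.
rewrite /gamma_of.
case/orP => /eqP ->; [rewrite (exprSr y t) | rewrite (exprSr y s)]; by field.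
Qed.

Lemma construct_part n a (y : C) :
  (forall k, (k <= n)%N -> (0 < a k)%N) ->
  y \is Num.real -> root (pX1A C n a) y ->
  (forall (N : nat) (e : 'I_N -> nat) (x0 : C), incr_ok C n a e ->
        cons_last y e x0 = x0 /\
        regular (gamma_of y) (cons_seq y e x0) /\
        real_seq (cons_seq y e x0)).
Proof.
move=> ha yr /rootP ry N e x0 hinc.
have h0 : \sum_(i < N) y ^+ e i = 0 by rewrite (@sum_pow_eq n a N e y hinc).
have y1 : y != 1.
  by apply/negP => /eqP y1; move: (pX1A_at1 n a ha); rewrite -y1 ry eqxx.
split; first by rewrite /cons_last h0 addr0.
split.
  move=> k; rewrite reg_uv.
  have e1 := cons_step N y e x0 k h0.
  have := cons_step N y e x0 (ord_pred k) h0; rewrite ordS_predK => e2.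
  rewrite -[cons_seq y e x0 (ord_pred k) - _]opprB e1 e2.
  by apply: gamma_alg; case: hinc => _ _ /(_ (ord_pred k)); rewrite ordS_predK.
exists 1, (- x0); split; first exact: oner_neq0.
move=> k; rewrite mul1r /cons_seq addrC addKr.
by apply: rpred_sum => i _; apply: rpredX.
Qed.

Lemma Dseq_size n : size (Dseq n) = n.+1.
Proof. by elim: n => //= n ->. Qed.

Lemma construct_e n a : (forall k, (k <= n)%N -> (0 < a k)%N) ->
  exists e : 'I_(2 * \sum_(k < n.+1) a k) -> nat, incr_ok C n a e.
Proof.
move=> ha.
set L := Lseq a n.
have sL : size L = (2 * \sum_(k < n.+1) a k)%N.
  rewrite /L /Lseq size_cat /= Dseq_size -(Aseq_size a n ha).
  move: (size _) => s; lia.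
have cnt (j : nat) : cm j L = ((if j <= n then a j else 0) +
                            (if 0 < j <= n.+1 then a j.-1 else 0))%N.
  rewrite /L /Lseq cm_cat cm_cons Dseq_count.
  have := Aseq_count a n j ha.
  have : (j <= n \/ j = n.+1 \/ n.+1 < j)%N by lia.
  case=> [h|[h|h]].
  - move: (cm j (Aseq a n)) => c; repeat case: ifP => ?; lia.
  - subst j; have := ha n (leqnn n); move: (cm _ (Aseq a n)) => c.
    rewrite /= eqxx leqnn ltnn /=; move: (a n) => x; lia.
  - move: (cm j (Aseq a n)) => c; repeat case: ifP => ?; lia.
exists (fun i => nth 0%N L i); split.
- move=> i; rewrite leqNgt; apply/negP => hi.
  have c0 := card_nth _ _ (nth 0%N L i) sL.
  rewrite cnt in c0.
  have : (nth 0%N L i <= n)%N = false by lia.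
  move=> h1; rewrite h1 in c0.
  have : (0 < nth 0%N L i <= n.+1)%N = false by lia.
  move=> h2; rewrite h2 in c0.
  have := card0_eq c0 i; by rewrite inE eqxx.
- move=> k hk; rewrite card_nth // cnt.
  rewrite /pX1A mulrDl mul1r coefD coefXM /pA !coef_poly natrD addrC.
  congr (_ + _); last by rewrite ltnS; case: ifP.
  case: k hk => [|k] hk //=.
  by rewrite ltnS; case: ifP.
- move=> i.
  have /andP [hp /eqP hl] := Lseq_path a n.
  have hi := ltn_ord i.
  change (rr (nth 0%N L i) (nth 0%N L (ordS i))).
  rewrite /=.
  case: (ltnP i.+1 (2 * \sum_(k < n.+1) a k)) => hi1.
    rewrite modn_small //.
    by have := (pathP 0%N hp) i.+1; rewrite sL => /(_ hi1).
  have eN : i.+1 = (2 * \sum_(k < n.+1) a k)%N by lia.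
  rewrite eN modnn.
  have -> : nth 0%N L i = last 0%N L.
    by rewrite -nth_last; congr nth; move: eN; rewrite sL; lia.
  rewrite hl; apply: ((pathP 0%N hp) 0%N).
  by rewrite sL muln_gt0 /= big_ord_recl addn_gt0 (ha 0%N (leq0n n)).
Qed.

Lemma quad_roots (g q y : C) : g / 2 - 1 != 0 ->
  g / 2 * (q - 1) ^+ 2 = 1 + q ^+ 2 -> g / 2 * (y - 1) ^+ 2 = 1 + y ^+ 2 ->
  q = y \/ q * y = 1.
Proof.
move=> c0 hq hy.
have : (g / 2 - 1) * ((q - y) * (q * y - 1)) =
       y * (g / 2 * (q - 1) ^+ 2 - (1 + q ^+ 2)) - q * (g / 2 * (y - 1) ^+ 2 - (1 + y ^+ 2)).
  by ring.
rewrite hq hy !subrr !mulr0 subrr => /eqP.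
rewrite !mulf_eq0 (negbTE c0) /= !subr_eq0 => /orP [] /eqP h; by [left | right].
Qed.

Lemma ratio_eq (g D E : C) : D != 0 ->
  g / 2 * (E - D) ^+ 2 = D ^+ 2 + E ^+ 2 -> g / 2 * (E / D - 1) ^+ 2 = 1 + (E / D) ^+ 2.
Proof.
move=> D0 h.
have -> : g / 2 * (E / D - 1) ^+ 2 = (g / 2 * (E - D) ^+ 2) / D ^+ 2 by field.
by rewrite h; field.
Qed.

Lemma pow_neq1 (y : C) n : y \is Num.real -> y ^+ 2 != 1 -> y ^+ n.+1 != 1.
Proof.
move=> yr y2; apply/negP => /eqP h.
have : `|y| ^+ n.+1 = 1 by rewrite -normrX h normr1.
move/eqP; rewrite pexprn_eq1 ?normr_ge0 // => /eqP ny.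
by move: y2; rewrite -real_normK // ny expr1n eqxx.
Qed.

Lemma powz_inj (y : C) (a b : int) : y \is Num.real -> y != 0 -> y ^+ 2 != 1 ->
  y ^ a = y ^ b -> a = b.
Proof.
move=> yr y0 y2 h.
have h1 : y ^ (a - b) = 1.
  have := expfzDr (a - b) b y0; rewrite subrK h => hb.
  apply: (mulIf (expfz_neq0 b y0)); by rewrite mul1r -hb.
apply/eqP; rewrite -subr_eq0; move: h1.
case: (a - b) => [[|n]|n] //=.
  by move=> /eqP; rewrite (negbTE (pow_neq1 y n yr y2)).
by move=> /eqP; rewrite invr_eq1 (negbTE (pow_neq1 y n yr y2)).
Qed.

Lemma sum_lt_tele N (F : 'I_N.+1 -> C) (d : 'I_N.+1 -> C) :
  (forall k, d k = F (ordS k) - F k) ->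
  forall k : 'I_N.+1, F k - F ord0 = \sum_(i < N.+1 | (i < k)%N) d i.
Proof.
move=> hd.
have H m : (m < N.+1)%N -> F (inord m) - F ord0 = \sum_(i < N.+1 | (i < m)%N) d i.
  elim: m => [|m IH] hm.
    rewrite big_pred0 => [|i]; last by [].
    by rewrite (_ : inord 0 = ord0) ?subrr //; apply: val_inj; rewrite /= inordK.
  have hm' : (m < N.+1)%N by lia.
  have -> : \sum_(i < N.+1 | (i < m.+1)%N) d i =
            \sum_(i < N.+1 | (i < m)%N) d i + d (inord m).
    by have := sum_ltS N.+1 d (inord m); rewrite inordK.
  rewrite -IH // hd.
  have -> : ordS (inord m) = inord m.+1 :> 'I_N.+1.
    by apply: val_inj; rewrite /= !inordK // modn_small.
  ring.
move=> k; have := H k (ltn_ord k); by rewrite inord_val.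
Qed.

Lemma sq0 : (0 : C) ^+ 2 = 0. Proof. by rewrite expr2 mulr0. Qed.

Lemma zero_helper (c v : C) : c - 1 != 0 -> c * v ^+ 2 = v ^+ 2 -> v = 0.
Proof.
move=> c1 h.
have : (c - 1) * v ^+ 2 = 0 by rewrite mulrBl h mul1r subrr.
by move/eqP; rewrite mulf_eq0 (negbTE c1) /= expf_eq0 /= => /eqP.
Qed.

Lemma powzS (y : C) (t : int) : y != 0 -> y ^ (t + 1) = y ^ t * y.
Proof. by move=> y0; rewrite expfzDr // expr1z. Qed.

Lemma powzP (y : C) (t : int) : y != 0 -> y ^ (t - 1) * y = y ^ t.
Proof. by move=> y0; rewrite -powzS // subrK. Qed.

Lemma converse_part N (gamma : C) (x : 'I_N -> C) :
     (3 <= N)%N -> gamma \is Num.real -> gamma != 1 -> gamma != 2 ->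
     regular gamma x -> real_seq x -> nonconstant x ->
     exists (n : nat) (a : nat -> nat) (y : C) (e : 'I_N -> nat)
            (l m : C) (r : 'I_N -> 'I_N),
       (forall k, (k <= n)%N -> (0 < a k)%N) /\
       N = (2 * \sum_(k < n.+1) a k)%N /\
       y \is Num.real /\ root (pX1A C n a) y /\
       incr_ok C n a e /\ gamma = gamma_of y /\
       l != 0 /\ rotation r /\
       (forall k, l * x (r k) + m = cons_seq y e 0 k).
Proof.
case: N x => [|N] x // hN gr g1 g2 hreg [l0 [m0 [l00 hre]]] [i0 [j0 hij]].
rename gamma into g.
pose d k := x (ordS k) - x k.
have hk k : g / 2 * (d k - d (ord_pred k)) ^+ 2 = d (ord_pred k) ^+ 2 + d k ^+ 2.
  have := hreg k; rewrite reg_uv.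
  rewrite (_ : x (ord_pred k) - x k = - d (ord_pred k)); last first.
    by rewrite /d ordS_predK opprB.
  rewrite sqrrN => <-; congr (_ * _ ^+ 2); rewrite /d; ring.
have c0 : g / 2 - 1 != 0.
  apply/negP => /eqP h.
  have : g = 2 * (g / 2 - 1) + 2 by field.
  by rewrite h mulr0 add0r => gE; move: g2; rewrite gE eqxx.
have dz k : d (ord_pred k) = 0 <-> d k = 0.
  have h := hk k; split=> h0.
    rewrite h0 subr0 sq0 add0r in h.
    exact: zero_helper h.
  rewrite h0 sub0r sqrrN sq0 addr0 in h.
  exact: zero_helper h.
have dnz k : d k != 0.
  apply/negP => /eqP h0.
  have all0 : forall j, d j = 0.
    apply: (cyc_ind _ (fun j => d j = 0) k h0) => j hj.
    by apply/(dz (ordS j)); rewrite pred_ordSK.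
  have allx : forall j, x j = x i0.
    apply: (cyc_ind _ (fun j => x j = x i0) i0) => // j hj.
    by have := all0 j; rewrite /d => /eqP; rewrite subr_eq0 hj => /eqP.
  by move: hij; rewrite (allx j0) eqxx.
have [y ey] : exists y, y = d (ordS ord0) / d ord0 by eexists.
have quad k : g / 2 * (d k / d (ord_pred k) - 1) ^+ 2 = 1 + (d k / d (ord_pred k)) ^+ 2.
  exact: ratio_eq (dnz _) (hk k).
have qy : g / 2 * (y - 1) ^+ 2 = 1 + y ^+ 2.
  by have := quad (ordS ord0); rewrite pred_ordSK -ey.
have y0 : y != 0 by rewrite ey mulf_neq0 ?invr_neq0 ?dnz.
have y1 : y != 1.
  apply/negP => /eqP e.
  have h2 : (2 : C) = 1 + y ^+ 2 - g / 2 * (y - 1) ^+ 2 by rewrite e; ring.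
  by rewrite qy subrr in h2; move: two_neq0; rewrite h2 eqxx.
have ym1 : y != -1.
  apply/negP => /eqP e.
  have h2 : g = 1 + (g / 2 * (y - 1) ^+ 2 - (1 + y ^+ 2)) / 2 by rewrite e; field.
  by rewrite qy subrr mul0r addr0 in h2; move: g1; rewrite h2 eqxx.
have y2 : y ^+ 2 != 1 by rewrite sqrf_eq1 negb_or y1 ym1.
have yr : y \is Num.real.
  have dr k : l0 * d k \is Num.real.
    have -> : l0 * d k = (l0 * x (ordS k) + m0) - (l0 * x k + m0) by rewrite /d; ring.
    by apply: rpredB.
  have -> : y = (l0 * d (ordS ord0)) / (l0 * d ord0).
    by rewrite ey invfM mulrACA mulfV // mul1r.
  exact: rpred_div.
have gam : g = gamma_of y.
  rewrite /gamma_of; have y1' : 1 - y != 0 by rewrite subr_eq0 eq_sym.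
  by rewrite -qy; field.
have rel k : d (ordS k) = d k * y \/ d (ordS k) * y = d k.
  have := quad_roots g _ y c0 (quad (ordS k)) qy; rewrite pred_ordSK.
  case=> h; [left | right].
    by rewrite -h mulrC divfK ?dnz.
  by rewrite -[RHS]mul1r -h mulrAC divfK ?dnz.
have Ez (k : 'I_N.+1) : exists t : int, d k == d ord0 * y ^ t.
  suff H m : (m < N.+1)%N -> exists t : int, d (inord m) == d ord0 * y ^ t.
    by have [t ht] := H k (ltn_ord k); exists t; rewrite inord_val in ht.
  elim: m => [|m IH] hm.
    exists 0; rewrite expr0z mulr1 (_ : inord 0 = ord0) //.
    by apply: val_inj; rewrite /= inordK.
  have [t /eqP ht] := IH (ltnW hm).
  have eS : ordS (inord m) = inord m.+1 :> 'I_N.+1.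
    by apply: val_inj; rewrite /= !inordK ?modn_small //; lia.
  case: (rel (inord m)) => h; rewrite eS in h.
    by exists (t + 1); apply/eqP; rewrite h ht powzS // mulrA.
  exists (t - 1); apply/eqP; apply: (mulIf y0).
  by rewrite h ht -mulrA powzP.
pose z k := xchoose (Ez k).
have hz k : d k = d ord0 * y ^ z k by apply/eqP; exact: (xchooseP (Ez k)).
have zadj k : z (ordS k) = z k + 1 \/ z (ordS k) = z k - 1.
  case: (rel k) => h; [left|right]; apply: (powz_inj y _ _ yr y0 y2);
    apply: (mulfI (dnz ord0)); rewrite -hz.
    by rewrite h hz powzS // mulrA.
  apply: (mulIf y0); by rewrite h hz -mulrA powzP.
pose B := (\sum_(i < N.+1) absz (z i))%N.
have zB i : (absz (z i) <= B)%N.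
  by rewrite /B (bigD1 i) //= leq_addr.
pose w i := absz (z i + B%:Z).
have wz i : (w i)%:Z = z i + B%:Z by exact: absB_aux (zB i).
have [imin _ hmin] := @arg_minnP _ ord0 predT w isT.
pose e i := (w i - w imin)%N.
have ez i : (e i)%:Z = z i - z imin.
  exact: ez_aux (wz i) (wz imin) (hmin i isT).
have eadj k : ((e k == (e (ordS k)).+1) || (e (ordS k) == (e k).+1))%N.
  exact: eadj_aux (ez k) (ez (ordS k)) (zadj k).
have emin : e imin = 0%N by rewrite /e subnn.
have [jmax _ hmax] := @arg_maxnP _ ord0 predT e isT.
pose n := (e jmax).-1.
have M1 : (0 < e jmax)%N.
  exact: M1_aux (hmax ord0 isT) (hmax (ordS ord0) isT) (eadj ord0).
have ele i : (e i <= n.+1)%N by rewrite /n prednK //; exact: hmax.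
pose l := (d ord0 * y ^ z imin)^-1.
have dimin : d ord0 * y ^ z imin != 0 by rewrite mulf_neq0 ?dnz ?expfz_neq0.
have hl k : l * d k = y ^+ e k.
  rewrite hz /l (_ : z k = z imin + (e k)%:Z); last by rewrite ez; ring.
  by rewrite expfzDr // -exprnP (mulrA (d ord0)) mulrA mulVf // mul1r.
pose m := - (l * x ord0).
pose a k := #|[set i | (e i == k) && (e (ordS i) == k.+1)]|.
have cross k : a k = #|[set i | (e i == k.+1) && (e (ordS i) == k)]|.
  rewrite /a !card_sum.
  have H : (\sum_(i < N.+1) (e i <= k) + \sum_(i < N.+1) ((e i == k.+1) && (e (ordS i) == k)) =
           \sum_(i < N.+1) (e (ordS i) <= k) + \sum_(i < N.+1) ((e i == k) && (e (ordS i) == k.+1)))%N.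
    rewrite -!big_split /=; apply: eq_bigr => i _; exact: cross_aux (eadj i).
  have H2 : (\sum_(i < N.+1) (e (ordS i) <= k) = \sum_(i < N.+1) (e i <= k))%N.
    by rewrite [RHS](reindex_inj (@ordS_inj _)).
  rewrite H2 in H; apply/esym; exact: (addnI H).
have cntb k : #|[set i | e i == k]| = (a k + (if k is k'.+1 then a k' else 0))%N.
  case: k => [|k].
    rewrite /a !card_sum addn0; apply: eq_bigr => i _; exact: cnt0_aux (eadj i).
  rewrite (cross k) /a !card_sum -big_split /=; apply: eq_bigr => i _; exact: cntS_aux (eadj i).
have an1 : a n.+1 = 0%N.
  rewrite /a card_sum big1 // => i _; by rewrite an1_aux // ele.
have apos k : (k <= n)%N -> (0 < a k)%N.
  move=> hkn; rewrite lt0n; apply/negP => /eqP a0.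
  have all_le : forall j, (e j <= k)%N.
    apply: (cyc_ind _ (fun i => (e i <= k)%N) imin) => [|i hi]; first by rewrite emin.
    have := card0_eq a0 i; rewrite inE => hin.
    exact: apos_aux (eadj i) hi hin.
  have := all_le jmax; move: hkn; rewrite /n; move: (e jmax) M1 => u; clear; lia.
have hinc : incr_ok C n a e.
  split => // k hk0.
  rewrite cntb /pX1A mulrDl mul1r coefD coefXM /pA !coef_poly natrD addrC.
  congr (_ + _).
    case: k hk0 => [|k] hk0 //=.
    by rewrite hk0.
  case: (ltnP k n.+1) => hk2 //.
  have -> : k = n.+1 by clear -hk0 hk2; lia.
  by rewrite an1.
have sumd : \sum_(i < N.+1) d i = 0.
  by rewrite /d sumrB [X in _ - X](reindex_inj (@ordS_inj _)) subrr.
exists n. exists a. exists y. exists e. exists l. exists m. exists (fun k => k). split; first exact: apos.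
split.
  have := @sum_partition N.+1 e n.+2 (fun _ => 1) (fun i => leq_ltn_trans (ele i) (ltnSn _)).
  rewrite sumr_const card_ord.
  under eq_bigr do rewrite mulr1.
  rewrite -natr_sum => /eqP; rewrite -[_ *+ _]/(N.+1)%:R eqr_nat => /eqP ->.
  rewrite (eq_bigr (fun i : 'I_n.+2 => (a i + (if nat_of_ord i is k'.+1 then a k' else 0))%N)); last first.
    by move=> i _; rewrite cntb.
  rewrite big_split /= [X in (X + _)%N]big_ord_recr [X in (_ + X)%N]big_ord_recl /=.
  rewrite an1 addn0 add0n mul2n -addnn.
  by congr (_ + _); apply: eq_bigr => i _.
split; first exact: yr.
split.
  apply/rootP; rewrite -(@sum_pow_eq n a N.+1 e y hinc).
  under eq_bigr do rewrite -hl.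
  by rewrite -mulr_sumr sumd mulr0.
split; first exact: hinc.
split; first exact: gam.
split; first by rewrite /l invr_eq0.
split; first by [].
move=> k; rewrite /cons_seq add0r /m.
have ht := sum_lt_tele N x d (fun k => erefl) k.
rewrite -mulrBr ht mulr_sumr; apply: eq_bigr => i _; exact: hl.
Qed.

End S.

Theorem theorem3p1 (C : numClosedFieldType) :
  (* construction *)
  (forall (n : nat) (a : nat -> nat) (y : C),
     (forall k, (k <= n)%N -> (0 < a k)%N) ->
     y \is Num.real -> root (pX1A C n a) y ->
     let N := (2 * \sum_(k < n.+1) a k)%N in
     (exists e : 'I_N -> nat, incr_ok C n a e) /\
     (forall (e : 'I_N -> nat) (x0 : C), incr_ok C n a e ->
        cons_last y e x0 = x0 /\
        regular (gamma_of y) (cons_seq y e x0) /\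
        real_seq (cons_seq y e x0))) /\
  (* converse, gamma <> 1, 2 *)
  (forall (N : nat) (gamma : C) (x : 'I_N -> C),
     (3 <= N)%N -> gamma \is Num.real -> gamma != 1 -> gamma != 2 ->
     regular gamma x -> real_seq x -> nonconstant x ->
     exists (n : nat) (a : nat -> nat) (y : C) (e : 'I_N -> nat)
            (l m : C) (r : 'I_N -> 'I_N),
       (forall k, (k <= n)%N -> (0 < a k)%N) /\
       N = (2 * \sum_(k < n.+1) a k)%N /\
       y \is Num.real /\ root (pX1A C n a) y /\
       incr_ok C n a e /\ gamma = gamma_of y /\
       l != 0 /\ rotation r /\
       (forall k, l * x (r k) + m = cons_seq y e 0 k)) /\
  (* gamma = 2 *)
  (forall (N : nat) (x : 'I_N -> C), (3 <= N)%N ->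
     regular 2 x <->
     exists c : pred 'I_N,
       (forall k, c k -> ~~ c (ordS k)) /\
       (forall k, ~~ c (ordS k) -> x (ordS k) = x k)) /\
  (* gamma = 1 *)
  (forall (N : nat) (x : 'I_N -> C), (3 <= N)%N ->
     (regular 1 x /\ real_seq x /\ nonconstant x) <->
     (~~ odd N /\ exists l m : C, l != 0 /\
        forall k : 'I_N, l * x k + m = (odd k)%:R)).
Proof.
split.
  move=> n a y ha yr ry N; split.
    exact: (construct_e C n a ha).
  move=> e x0 hinc; exact: (construct_part C n a y ha yr ry N e x0 hinc).
split.
  move=> N g x hN gr g1 g2 hreg hre hnc.
  exact: (converse_part C N g x hN gr g1 g2 hreg hre hnc).
split.
  move=> N x _; exact: partC.
move=> N x hN; exact: partD.
Qed.
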